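(* Let $\Sigma=(\sigma_0,\sigma_\infty,\sigma_1,\tau)$ be a special admissible 4-tuple in $S_{2n}^4$ such that $\sigma_1\tau$ contains the 4-cycle $(2n-h,h,k_1,k_2)$ with $h<k_1<k_2<2n-h$. If $n$ is even, $k_1=n-h$ and $k_2=n+h$, then the conjugacy class of $\Sigma$ contains exactly two special admissible 4-tuples; otherwise it contains exactly four.
   Context: Permutation products are read left to right. An admissible 4-tuple is $(\sigma_0,\sigma_\infty,\sigma_1,\tau)\in S_{2n}^4$ with $\sigma_0$ a product of $n$ disjoint transpositions, $\sigma_\infty$ a $2n$-cycle, $\sigma_1$ a product of $n-2$ disjoint transpositions, $\tau$ a transposition, and $\sigma_0\sigma_\infty\sigma_1\tau=\mathrm{id}$. It is special if $\sigma_\infty=(2n,2n-1,\dots,1)$ and $\sigma_1(2n)=\tau(2n)=2n$. Conjugacy means simultaneous conjugation by some $\gamma\in S_{2n}$. *)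

(* Defs.v *)
(* Points 1..2n are represented by 'I_(2*n) with label = val+1.
   mathcomp's permutation product is left-to-right: (s * t) x = t (s x),
   matching the paper's convention. *)
From mathcomp Require Import all_boot all_order all_fingroup.
Set Implicit Arguments. Unset Strict Implicit. Unset Printing Implicit Defensive.

Local Open Scope group_scope.

Definition pt (n : nat) := 'I_(2 * n).
Definition perm2n (n : nat) := {perm pt n}.
Definition tuple4 (n : nat) := (perm2n n * perm2n n * perm2n n * perm2n n)%type.

Definition lab (n : nat) (x : pt n) : nat := (val x).+1.

Definition prod_disj_transp (n : nat) (k : nat) (s : perm2n n) : bool :=
  (s * s == 1) && (#|[set x | s x != x]| == (2 * k)%N).

Definition full_cycle (n : nat) (s : perm2n n) : bool :=
  [forall x, #|porbit s x| == (2 * n)%N].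

Definition admissible (n : nat) (S : tuple4 n) : bool :=
  let: (s0, sinf, s1, t) := S in
  [&& prod_disj_transp n s0,
      full_cycle sinf,
      prod_disj_transp (n - 2)%N s1,
      prod_disj_transp 1 t &
      s0 * sinf * s1 * t == 1].

(* sigma_inf = (2n, 2n-1, ..., 1): label j |-> j-1 for j >= 2, and 1 |-> 2n *)
Definition is_sinf_std (n : nat) (s : perm2n n) : bool :=
  [forall x, lab (s x) == (if lab x == 1%N then (2 * n)%N else (lab x).-1)].

Definition special (n : nat) (S : tuple4 n) : bool :=
  let: (s0, sinf, s1, t) := S in
  [&& admissible S, is_sinf_std sinf &
      [forall x, (lab x == (2 * n)%N) ==> (s1 x == x) && (t x == x)]].

Definition conjugate (n : nat) (S S' : tuple4 n) : bool :=
  let: (a0, a1, a2, a3) := S in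
  let: (b0, b1, b2, b3) := S' in
  [exists g : perm2n n,
    [&& b0 == a0 ^ g, b1 == a1 ^ g, b2 == a2 ^ g & b3 == a3 ^ g]].

Definition special_in_class (n : nat) (S : tuple4 n) : {set tuple4 n} :=
  [set S' : tuple4 n | special S' && conjugate S S'].

(* Main.v *)
Require Import Defs.
From mathcomp Require Import all_boot all_order all_fingroup.
From mathcomp Require Import zify.
Set Implicit Arguments. Unset Strict Implicit. Unset Printing Implicit Defensive.

Section Sh.
Variable n : nat.
Local Notation N := (2 * n)%N.

Lemma vlt (x : pt n) : val x < N. Proof. exact: ltn_ord x. Qed.

Lemma pt_pos (x : pt n) : 0 < N.
Proof. exact: leq_ltn_trans (leq0n _) (ltn_ord x). Qed.

Definition sh (x : pt n) (i : nat) : pt n := Ordinal (ltn_pmod (val x + i) (pt_pos x)).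

Lemma val_sh x i : val (sh x i) = (val x + i) %% N. Proof. by []. Qed.

Lemma modsmall2 m : m < N + N -> m %% N = if m < N then m else m - N.
Proof.
move=> H; case: ifP => H1; first by rewrite modn_small.
have E : m = (m - N) + N by rewrite subnK // leqNgt H1.
by rewrite {1}E modnDr modn_small //; lia.
Qed.

Lemma val_shE x i : i <= N -> val (sh x i) = if val x + i < N then val x + i else val x + i - N.
Proof. move=> Hi; rewrite val_sh modsmall2 //. have := vlt x; lia. Qed.

Lemma sh0 x : sh x 0 = x.
Proof. by apply: val_inj; rewrite val_sh addn0 modn_small ?vlt. Qed.

Lemma shD x i j : sh (sh x i) j = sh x (i + j).
Proof. by apply: val_inj; rewrite !val_sh modnDml addnA. Qed.

Lemma shN x i : sh x (i + N) = sh x i.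
Proof. by apply: val_inj; rewrite !val_sh addnA modnDr. Qed.

Lemma shN0 x : sh x N = x.
Proof. by rewrite -(add0n N) shN sh0. Qed.

Lemma sh_inj x i j : i < N -> j < N -> sh x i = sh x j -> i = j.
Proof.
move=> Hi Hj /(congr1 val); rewrite !val_sh => /eqP.
by rewrite eqn_modDl !modn_small // => /eqP.
Qed.

Lemma sh_inj2 i : injective (sh ^~ i).
Proof.
move=> x y /(congr1 val); rewrite !val_sh => /eqP.
by rewrite eqn_modDr !modn_small ?vlt // => /eqP /val_inj.
Qed.

Definition dist (x y : pt n) := (val y + N - val x) %% N.

Lemma dist_lt x y : dist x y < N.
Proof. exact: ltn_pmod (pt_pos x). Qed.

Lemma sh_dist x y : sh x (dist x y) = y.
Proof.
apply: val_inj; rewrite val_sh /dist modnDmr addnBA; last by have := vlt x; lia.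
rewrite addnC -addnBA; last by have := vlt x; lia.
by rewrite subnn addn0 modnDr modn_small ?vlt.
Qed.

Lemma distE x y : dist x y = if val x <= val y then val y - val x else val y + N - val x.
Proof.
rewrite /dist modsmall2; last by have := vlt x; have := vlt y; lia.
have := vlt x; have := vlt y; case: ifP; case: ifP; lia.
Qed.

Lemma sh_fix x i : 0 < i < N -> sh x i != x.
Proof.
move=> Hi; apply/negP => /eqP E.
have : sh x i = sh x 0 by rewrite sh0.
move/sh_inj; have := pt_pos x; lia.
Qed.

Definition rotp (k : nat) : perm2n n := perm (@sh_inj2 k).
Lemma rotpE k x : rotp k x = sh x k. Proof. by rewrite permE. Qed.

Definition stdp (s : perm2n n) := forall x, s x = sh x (N - 1).

Lemma std_of (s : perm2n n) : is_sinf_std s -> stdp s.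
Proof.
move=> /forallP H x; have := H x; rewrite /lab => /eqP E.
apply: val_inj; rewrite val_sh modsmall2; last by have := vlt x; lia.
have := vlt x; move: E; case: ifP; case: ifP. all: move=> H1 H2 H3 H4; move: H1 H2 H3 H4; rewrite /=. all: set u := val x; set v := val (s x). all: lia.
Qed.

Lemma comm_sh (s g : perm2n n) : stdp s -> (forall x, g (s x) = s (g x)) ->
  forall x i, g (sh x i) = sh (g x) i.
Proof.
move=> Hs Hg.
have H1 x : g (sh x 1) = sh (g x) 1.
  have E : s (sh x 1) = x by rewrite Hs shD; have := pt_pos x => P; rewrite addnC subnK // shN0.
  by rewrite -{2}E Hg Hs shD subnK ?shN0 // (pt_pos x).
move=> x; elim=> [|i IH]; first by rewrite !sh0.
by rewrite -(addn1 i) -!shD H1 IH.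
Qed.

Lemma comm_unique (s g g' : perm2n n) (m : pt n) : stdp s ->
  (forall x, g (s x) = s (g x)) -> (forall x, g' (s x) = s (g' x)) -> g m = g' m -> g = g'.
Proof.
move=> Hs Hg Hg' E; apply/permP => y.
by rewrite -(sh_dist m y) (comm_sh Hs Hg) (comm_sh Hs Hg') E.
Qed.

Lemma comm_rot (s g : perm2n n) (x0 : pt n) : stdp s -> (forall x, g (s x) = s (g x)) ->
  forall x, g x = sh x (dist x0 (g x0)).
Proof.
move=> Hs Hg x; have E1 := sh_dist x0 (g x0); have E2 := sh_dist x0 x.
set d1 := dist x0 (g x0) in E1 *; set d2 := dist x0 x in E2 *.
by rewrite -[in LHS]E2 (comm_sh Hs Hg) -[in LHS]E1 -[in RHS]E2 !shD addnC.
Qed.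

Lemma rotp_comm (s : perm2n n) k : stdp s -> forall x, rotp k (s x) = s (rotp k x).
Proof. by move=> Hs x; rewrite !rotpE !Hs !shD addnC. Qed.

End Sh.

Lemma val_shP n (x : pt n) i : i <= 2 * n ->
  (val x + i < 2 * n /\ val (sh x i) = val x + i) \/
  (2 * n <= val x + i /\ val (sh x i) = val x + i - 2 * n).
Proof.
move=> Hi; rewrite val_shE //; case: ifP => H; [left|right]; split => //; lia.
Qed.

Lemma half2 L : ~~ odd L -> L = 2 * L./2.
Proof. move=> H; have := odd_double_half L; rewrite (negbTE H) add0n -muln2; lia. Qed.

Section Main.
Variables (n : nat) (s0 sinf s1 t : perm2n n) (h k1 k2 : nat) (a b c d : pt n).
Local Notation N := (2 * n)%N.
Hypothesis HS : special (s0, sinf, s1, t).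
Hypotheses (hk : h < k1 < k2) (hk2 : k2 < N - h).
Hypotheses (la : lab a = N - h) (lb : lab b = h) (lc : lab c = k1) (ld : lab d = k2).
Hypotheses (pa : (s1 * t)%g a = b) (pb : (s1 * t)%g b = c) (pc : (s1 * t)%g c = d) (pd : (s1 * t)%g d = a).

Lemma HS' : [/\ prod_disj_transp n s0, full_cycle sinf, prod_disj_transp (n - 2) s1,
  prod_disj_transp 1 t & (s0 * sinf * s1 * t)%g == 1%g] /\ is_sinf_std sinf /\
  [forall x, (lab x == N) ==> (s1 x == x) && (t x == x)].
Proof. by move: HS => /and3P [/and5P [? ? ? ? ?] ? ?]. Qed.

Lemma invol (s : perm2n n) : (s * s == 1)%g -> forall x, s (s x) = x.
Proof. by move=> /eqP E x; rewrite -permM E perm1. Qed.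

Lemma Hs0i x : s0 (s0 x) = x.
Proof. by case: HS' => [[/andP [H _] _ _ _ _] _]; apply: invol. Qed.
Lemma Hs1i x : s1 (s1 x) = x.
Proof. by case: HS' => [[_ _ /andP [H _] _ _] _]; apply: invol. Qed.
Lemma Hti x : t (t x) = x.
Proof. by case: HS' => [[_ _ _ /andP [H _] _] _]; apply: invol. Qed.
Lemma Ht2 : #|[set x | t x != x]| = 2.
Proof. by case: HS' => [[_ _ _ /andP [_ /eqP H] _] _]. Qed.
Lemma Hs0f x : s0 x != x.
Proof.
case: HS' => [[/andP [_ /eqP H] _ _ _ _] _].
have E : [set x | s0 x != x] = setT.
  have C : #|pt n| = N by exact: card_ord.
  apply/eqP; rewrite eqEcard subsetT cardsT H /=; exact: (eq_leq C).
have : x \in [set x | s0 x != x] by rewrite E inE.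
by rewrite inE.
Qed.
Lemma Hstd : stdp sinf.
Proof. by case: HS' => [_ [H _]]; apply: std_of. Qed.
Lemma Hprod : (s0 * sinf * s1 * t)%g = 1%g.
Proof. by case: HS' => [[_ _ _ _ /eqP H] _]. Qed.

Definition p x := t (s1 x).

Lemma va : val a = N - h - 1. Proof. by move: la; rewrite /lab; lia. Qed.
Lemma vb : (val b).+1 = h. Proof. by []. Qed.
Lemma vc : (val c).+1 = k1. Proof. by []. Qed.
Lemma vd : (val d).+1 = k2. Proof. by []. Qed.

Ltac nums := have := va; have := vb; have := vc; have := vd; have := hk; have := hk2; lia.

Lemma ne_val (x y : pt n) : val x <> val y -> x != y.
Proof. by move=> H; apply/eqP => E; apply: H; rewrite E. Qed.

Lemma dab : a != b. Proof. apply: ne_val; nums. Qed.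
Lemma dac : a != c. Proof. apply: ne_val; nums. Qed.
Lemma dad : a != d. Proof. apply: ne_val; nums. Qed.
Lemma dbc : b != c. Proof. apply: ne_val; nums. Qed.
Lemma dbd : b != d. Proof. apply: ne_val; nums. Qed.
Lemma dcd : c != d. Proof. apply: ne_val; nums. Qed.

Lemma pa' : p a = b. Proof. by rewrite /p -permM. Qed.
Lemma pb' : p b = c. Proof. by rewrite /p -permM. Qed.
Lemma pc' : p c = d. Proof. by rewrite /p -permM. Qed.
Lemma pd' : p d = a. Proof. by rewrite /p -permM. Qed.

Lemma Lsinf y : p (sinf y) = s0 y.
Proof.
have := congr1 (fun g : perm2n n => g (s0 y)) Hprod.
by rewrite !permM perm1 Hs0i.
Qed.

Lemma Npos : 0 < N. Proof. exact: pt_pos a. Qed.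

Lemma FE u : p (sh (p u) (N - 1)) = sh u 1.
Proof.
have E : sinf (sh u 1) = u by rewrite Hstd shD addnC subnK ?Npos // shN0.
by rewrite -{1}E Lsinf -Hstd Lsinf Hs0i.
Qed.

Lemma FPF u : p u != sh u 1.
Proof.
have E : sinf (sh u 1) = u by rewrite Hstd shD addnC subnK ?Npos // shN0.
by rewrite -{1}E Lsinf Hs0f.
Qed.

Lemma supp2 x : t x != x -> forall y, y != x -> y != t x -> t y = y.
Proof.
move=> Hx y H1 H2.
have EM : [set z | t z != z] = [set x; t x].
  apply/esym/eqP; rewrite eqEcard Ht2 cards2 eq_sym Hx andbT.
  by apply/subsetP => z; rewrite !inE => /orP [] /eqP ->; rewrite ?Hti // eq_sym.
apply/eqP/negP => /negP Hy.
have : y \in [set z | t z != z] by rewrite inE.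
by rewrite EM !inE (negbTE H1) (negbTE H2).
Qed.

Definition tc1 := [/\ t a = c, t c = a, (forall y, y != a -> y != c -> t y = y) &
   [/\ s1 a = b, s1 b = a, s1 c = d & s1 d = c]].
Definition tc2 := [/\ t b = d, t d = b, (forall y, y != b -> y != d -> t y = y) &
   [/\ s1 b = c, s1 c = b, s1 d = a & s1 a = d]].

Lemma tcase : tc1 \/ tc2.
Proof.
have pa2 := pa'; have pb2 := pb'; have pc2 := pc'; have pd2 := pd'.
rewrite /p in pa2 pb2 pc2 pd2.
case Htb: (t b == b).
- move/eqP: Htb => Htb.
  have E1 : s1 a = b by apply: (@perm_inj _ t); rewrite pa2 Htb.
  have E2 : s1 b = a by rewrite -E1 Hs1i.
  have E3 : t a = c by rewrite -E2.
  have E4 : t c = a by rewrite -E3 Hti.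
  have Ha : t a != a by rewrite E3 eq_sym dac.
  have Hy := supp2 Ha.
  have Td : t d = d by apply: Hy; rewrite ?E3 eq_sym ?dad // dcd.
  have E5 : s1 c = d by apply: (@perm_inj _ t); rewrite pc2 Td.
  left; split => //; first by move=> y ? ?; apply: Hy; rewrite ?E3.
  by split => //; rewrite -E5 Hs1i.
- move/negbT: Htb => Htb.
  have Hy := supp2 Htb.
  have Eu : s1 a = t b by rewrite -pa2 Hti.
  case Htba: (t b == a).
  + move/eqP: Htba => Htba.
    have Ta : t a = b by rewrite -Htba Hti.
    have E1 : s1 d = b by rewrite -Ta -pd2 Hti.
    have E2 : s1 b = d by rewrite -E1 Hs1i.
    have Td : t d = d by apply: Hy; rewrite ?Htba eq_sym ?dbd // dad.
    by move: pb2; rewrite E2 Td => /eqP; rewrite eq_sym (negbTE dcd).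
  + move/negbT: Htba => Htba.
    have Ta : t a = a by apply: Hy; [exact: dab | rewrite eq_sym].
    have E1 : s1 d = a by rewrite -Ta -pd2 Hti.
    have E2 : s1 a = d by rewrite -E1 Hs1i.
    have Tb : t b = d by rewrite -Eu.
    have Td : t d = b by rewrite -Tb Hti.
    have Tc : t c = c by apply: Hy; rewrite ?Tb ?dcd // eq_sym dbc.
    have E3 : s1 b = c by rewrite -Tc -pb2 Hti.
    right; split => //.
    - by move=> y; rewrite -Tb; apply: Hy.
    - by split => //; rewrite -E3 Hs1i.
Qed.

Definition out y := [&& y != a, y != b, y != c & y != d].

Lemma outC0 y : out y -> [/\ t y = y, s1 y = p y & p (p y) = y].
Proof.
case/and4P => ya yb yc yd.
case: tcase => [[T1 T2 T3 [S1 S2 S3 S4]]|[T1 T2 T3 [S1 S2 S3 S4]]].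
- have Ty : t y = y by apply: T3.
  have Hs : out (s1 y).
    apply/and4P; split; apply/eqP => E; move: (congr1 s1 E); rewrite Hs1i ?S1 ?S2 ?S3 ?S4 => E';
    by move: ya yb yc yd; rewrite E' eqxx ?andbF.
  case/and4P: Hs => h1 h2 h3 h4.
  have Ts : t (s1 y) = s1 y by apply: T3.
  by rewrite /p Ts Hs1i Ty.
- have Ty : t y = y by apply: T3.
  have Hs : out (s1 y).
    apply/and4P; split; apply/eqP => E; move: (congr1 s1 E); rewrite Hs1i ?S1 ?S2 ?S3 ?S4 => E';
    by move: ya yb yc yd; rewrite E' eqxx ?andbF.
  case/and4P: Hs => h1 h2 h3 h4.
  have Ts : t (s1 y) = s1 y by apply: T3.
  by rewrite /p Ts Hs1i Ty.
Qed.

Lemma inC0 y : ~~ out y -> s1 y != y.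
Proof.
move=> Ho; apply/eqP => E; move: Ho; rewrite /out !negb_and !negbK => /or4P [] /eqP Ey; subst y;
case: tcase => [[_ _ _ [S1 S2 S3 S4]]|[_ _ _ [S1 S2 S3 S4]]]; rewrite ?S1 ?S2 ?S3 ?S4 in E;
move/(congr1 (fun z : pt n => val z)): E; nums.
Qed.


Lemma outpp y : out y -> p (p y) = y. Proof. by case/outC0. Qed.

Lemma eq_val (x y : pt n) : val x = val y -> x = y. Proof. exact: val_inj. Qed.

Lemma out_of_val y : val y <> val a -> val y <> val b -> val y <> val c -> val y <> val d -> out y.
Proof. by move=> *; apply/and4P; split; apply: ne_val. Qed.

Definition arc x L := [/\ 0 < L < N, p x = sh x L & forall j, 0 < j < L -> out (sh x j)].

Lemma rainbow x L : arc x L -> forall i, i < L -> p (sh x i) = sh x (L - i).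
Proof.
case=> HL Hx Hout; elim=> [_|i IH Hi]; first by rewrite sh0 subn0.
have F := FE (sh x i); rewrite IH ?(ltnW Hi) // shD in F.
have E : L - i + (N - 1) = (L - i.+1) + N by have := Npos; lia.
rewrite E shN shD addn1 in F.
rewrite -F; apply: outpp; apply: Hout; lia.
Qed.

Lemma rain_even x L : arc x L -> ~~ odd L.
Proof.
move=> HA; apply/negP => Ho.
have Hl := odd_double_half L; rewrite Ho -muln2 in Hl.
set i := L./2 in Hl.
have Hi : i < L by lia.
have R := rainbow HA Hi.
have E : L - i = i + 1 by lia.
by move: (FPF (sh x i)); rewrite R E -shD eqxx.
Qed.

Definition La := 2 * h.
Definition Lb := k1 - h.
Definition Lc := k2 - k1.
Definition Ld := N - h - k2.

Ltac shv x j := let Hj := fresh "Hj" in (have Hj : j <= N; first nums); case: (val_shP x Hj) => [[? ->]|[? ->]].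

Lemma arcA : arc a La.
Proof.
split; first by rewrite /La; nums.
- rewrite pa' /La; apply: eq_val; shv a (2 * h); nums.
- move=> j Hj; rewrite /La in Hj; apply: out_of_val; shv a j; nums.
Qed.
Lemma arcB : arc b Lb.
Proof.
split; first by rewrite /Lb; nums.
- rewrite pb' /Lb; apply: eq_val; shv b (k1 - h); nums.
- move=> j Hj; rewrite /Lb in Hj; apply: out_of_val; shv b j; nums.
Qed.
Lemma arcC : arc c Lc.
Proof.
split; first by rewrite /Lc; nums.
- rewrite pc' /Lc; apply: eq_val; shv c (k2 - k1); nums.
- move=> j Hj; rewrite /Lc in Hj; apply: out_of_val; shv c j; nums.
Qed.
Lemma arcD : arc d Ld.
Proof.
split; first by rewrite /Ld; nums.
- rewrite pd' /Ld; apply: eq_val; shv d (N - h - k2); nums.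
- move=> j Hj; rewrite /Ld in Hj; apply: out_of_val; shv d j; nums.
Qed.

Lemma cover y : dist a y < La \/ dist b y < Lb \/ dist c y < Lc \/ dist d y < Ld.
Proof.
rewrite /La /Lb /Lc /Ld !distE; have := vlt y.
do 4 (case: ifP => ?); nums.
Qed.


Definition M (x : pt n) L := sh x (L./2).

Lemma mid_fix x L : arc x L -> [/\ s1 (M x L) = M x L, t (M x L) = M x L & p (M x L) = M x L].
Proof.
move=> HA; have Ev := half2 (rain_even HA); case: (HA) => HL _ Hout.
have Hi : L./2 < L by lia.
have E2 : L - L./2 = L./2 by lia.
have Hp : p (M x L) = M x L by rewrite /M (rainbow HA Hi) E2.
have Ho : out (M x L) by apply: Hout; lia.
by case: (outC0 Ho) => T S _; split => //; rewrite S.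
Qed.

Lemma mid_gen x L y : arc x L -> ~~ out x -> dist x y < L -> out y -> p y = y -> y = M x L.
Proof.
move=> HA Hx Hd Hy Hp.
have E := sh_dist x y; set i := dist x y in E Hd.
have R := rainbow HA Hd; rewrite E Hp in R.
case: (HA) => HL _ _.
have Hi : i != 0.
  by apply/eqP => i0; move: Hy; rewrite -E i0 sh0 => Hy'; rewrite Hy' in Hx.
have Ei : i = L - i.
  apply: (@sh_inj _ x); [lia|lia|]; by rewrite E.
have L2 : L = i.*2 by rewrite -muln2; lia.
by rewrite /M L2 doubleK E.
Qed.

Lemma nouta : ~~ out a. Proof. by rewrite /out eqxx. Qed.
Lemma noutb : ~~ out b. Proof. by rewrite /out eqxx andbF. Qed.
Lemma noutc : ~~ out c. Proof. by rewrite /out eqxx !andbF. Qed.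
Lemma noutd : ~~ out d. Proof. by rewrite /out eqxx !andbF. Qed.

Definition Ma := M a La.
Definition Mb := M b Lb.
Definition Mc := M c Lc.
Definition Md := M d Ld.
Definition Mset := Ma |: (Mb |: (Mc |: [set Md])).

Lemma mid_char y : s1 y = y -> t y = y -> y \in Mset.
Proof.
move=> S T.
have Hy : out y by apply/negPn/negP => /inC0; rewrite S eqxx.
have Hp : p y = y by rewrite /p S T.
rewrite !inE; case: (cover y) => [H|[H|[H|H]]].
- by rewrite (mid_gen arcA nouta H Hy Hp) eqxx.
- by rewrite (mid_gen arcB noutb H Hy Hp) eqxx ?orbT.
- by rewrite (mid_gen arcC noutc H Hy Hp) eqxx ?orbT.
- by rewrite (mid_gen arcD noutd H Hy Hp) eqxx ?orbT.
Qed.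

Lemma Mset_fix m : m \in Mset -> s1 m = m /\ t m = m.
Proof.
rewrite !inE => /or4P [] /eqP ->.
- by case: (mid_fix arcA).
- by case: (mid_fix arcB).
- by case: (mid_fix arcC).
- by case: (mid_fix arcD).
Qed.

Lemma Ev_b : k1 - h = 2 * (k1 - h)./2. Proof. exact: (half2 (rain_even arcB)). Qed.
Lemma Ev_c : k2 - k1 = 2 * (k2 - k1)./2. Proof. exact: (half2 (rain_even arcC)). Qed.
Lemma Ev_d : N - h - k2 = 2 * (N - h - k2)./2. Proof. exact: (half2 (rain_even arcD)). Qed.

Lemma vMa : val Ma = N - 1.
Proof. rewrite /Ma /M /La (mul2n h) doubleK; shv a h; nums. Qed.
Lemma vMb : val b < val Mb < val c.
Proof. have := Ev_b; rewrite /Mb /M /Lb; shv b ((k1 - h)./2); nums. Qed.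
Lemma vMc : val c < val Mc < val d.
Proof. have := Ev_c; rewrite /Mc /M /Lc; shv c ((k2 - k1)./2); nums. Qed.
Lemma vMd : val d < val Md < val a.
Proof. have := Ev_d; rewrite /Md /M /Ld; shv d ((N - h - k2)./2); nums. Qed.

Ltac mnums := have := vMa; have := vMb; have := vMc; have := vMd; nums.

Lemma Mset_card : #|Mset| = 4.
Proof.
rewrite /Mset !cardsU1 cards1 !inE.
have F (x y : pt n) : val x <> val y -> (x == y) = false by move=> H; apply/negbTE/ne_val.
rewrite !F //; mnums.
Qed.

Lemma rot_half (u : pt n) k : 0 < k < N -> sh (sh u k) k = u -> k = n.
Proof.
move=> Hk; rewrite shD => E.
case: (ltnP (k + k) N) => H.
- have : sh u (k + k) = sh u 0 by rewrite sh0.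
  move/sh_inj; have := Npos; lia.
- move: E; rewrite -(subnK H) shN => E.
  have : sh u (k + k - N) = sh u 0 by rewrite sh0.
  move/sh_inj; have := Npos; lia.
Qed.

Lemma fin_sym : sh a n = c -> sh b n = d -> [&& ~~ odd n, k1 == n - h & k2 == n + h].
Proof.
move=> E1 E2.
have V1 : val (sh a n) = val c by rewrite E1.
have V2 : val (sh b n) = val d by rewrite E2.
move: V1 V2; shv a n; shv b n; move=> V1 V2.
all: have K1 : k1 = n - h by nums.
all: have K2 : k2 = n + h by nums.
all: rewrite K1 K2 !eqxx !andbT.
all: have := Ev_b; rewrite K1 => Eb.
all: have -> : n = (h + (n - h - h)./2).*2 by rewrite -muln2; lia.
all: by rewrite odd_double.
Qed.

Lemma stab (g : perm2n n) : (forall x, g (sinf x) = sinf (g x)) -> (forall x, g (s1 x) = s1 (g x)) ->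
  (forall x, g (t x) = t (g x)) -> (exists y, g y != y) ->
  (forall x, g x = sh x n) /\ [&& ~~ odd n, k1 == n - h & k2 == n + h].
Proof.
move=> Gs G1 Gt [y Hy].
have Hg := comm_rot y Hstd Gs.
set k := dist y (g y) in Hg.
have HkN : k < N by apply: dist_lt.
have Hk0 : 0 < k.
  rewrite lt0n; apply/eqP => k0; move: Hy; by rewrite Hg k0 sh0 eqxx.
have Gfix x : g x != x by rewrite Hg sh_fix // Hk0 HkN.
have Gp x : g (p x) = p (g x) by rewrite /p Gt G1.
have swap (u v : pt n) : g u = v -> g v = u -> k = n.
  by move=> E1 E2; apply: (@rot_half u); [rewrite Hk0 HkN| rewrite -!Hg E1 E2].
case: tcase => [[T1 T2 T3 [S1 S2 S3 S4]]|[T1 T2 T3 [S1 S2 S3 S4]]].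
- have ga : g a = c.
    case: (eqVneq (g a) c) => // Hne.
    have F : t (g a) = g a by apply: T3; [exact: Gfix | exact: Hne].
    by move: F; rewrite -Gt T1 => /perm_inj/eqP; rewrite eq_sym (negbTE dac).
  have gc : g c = a.
    case: (eqVneq (g c) a) => // Hne.
    have F : t (g c) = g c by apply: T3; [exact: Hne | exact: Gfix].
    by move: F; rewrite -Gt T2 => /perm_inj/eqP; rewrite (negbTE dac).
  have kn := swap a c ga gc.
  have Gn x : g x = sh x n by rewrite Hg kn.
  have E1 : sh a n = c by rewrite -Gn.
  have E2 : sh b n = d by rewrite -Gn -pa' Gp ga pc'.
  by split => //; apply: fin_sym.
- have gb : g b = d.
    case: (eqVneq (g b) d) => // Hne.
    have F : t (g b) = g b by apply: T3; [exact: Gfix | exact: Hne].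
    by move: F; rewrite -Gt T1 => /perm_inj/eqP; rewrite eq_sym (negbTE dbd).
  have gd : g d = b.
    case: (eqVneq (g d) b) => // Hne.
    have F : t (g d) = g d by apply: T3; [exact: Hne | exact: Gfix].
    by move: F; rewrite -Gt T2 => /perm_inj/eqP; rewrite (negbTE dbd).
  have kn := swap b d gb gd.
  have Gn x : g x = sh x n by rewrite Hg kn.
  have E2 : sh b n = d by rewrite -Gn.
  have E1 : sh a n = c by rewrite -Gn -pd' Gp gd pb'.
  by split => //; apply: fin_sym.
Qed.


Section Sym.
Hypotheses (K1 : k1 = n - h) (K2 : k2 = n + h).

Lemma pairs : [/\ sh a n = c, sh b n = d, sh c n = a & sh d n = b].
Proof.
split; apply: eq_val.
- shv a n; nums.
- shv b n; nums.
- shv c n; nums.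
- shv d n; nums.
Qed.

Lemma LaLc : Lc = La. Proof. rewrite /Lc /La; nums. Qed.
Lemma LbLd : Ld = Lb. Proof. rewrite /Ld /Lb; nums. Qed.

Lemma pair_comm x x' L i : arc x L -> arc x' L -> sh x n = x' -> i < L ->
  p (sh (sh x i) n) = sh (p (sh x i)) n.
Proof.
move=> HA HA' E Hi.
rewrite shD addnC -shD E (rainbow HA' Hi) (rainbow HA Hi) shD addnC -shD E //.
Qed.

Lemma pcomm y : p (sh y n) = sh (p y) n.
Proof.
case: pairs => Pa Pb Pc Pd.
have aC : arc c La by rewrite -LaLc; exact: arcC.
have aA : arc a Lc by rewrite LaLc; exact: arcA.
have aD : arc d Lb by rewrite -LbLd; exact: arcD.
have aB : arc b Ld by rewrite LbLd; exact: arcB.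
case: (cover y) => [H|[H|[H|H]]].
- by rewrite -(sh_dist a y); apply: (pair_comm arcA aC).
- by rewrite -(sh_dist b y); apply: (pair_comm arcB aD).
- by rewrite -(sh_dist c y); apply: (pair_comm arcC aA).
- by rewrite -(sh_dist d y); apply: (pair_comm arcD aB).
Qed.

Lemma tcomm y : t (sh y n) = sh (t y) n.
Proof.
case: pairs => Pa Pb Pc Pd.
case: tcase => [[T1 T2 T3 _]|[T1 T2 T3 _]].
- case: (eqVneq y a) => [->|ya]; first by rewrite Pa T1 T2 Pc.
  case: (eqVneq y c) => [->|yc]; first by rewrite Pc T1 T2 Pa.
  rewrite (T3 y) // T3 //.
  + by apply/eqP => E; move: yc; rewrite -Pc in E; rewrite (sh_inj2 E) eqxx.
  + by apply/eqP => E; move: ya; rewrite -Pa in E; rewrite (sh_inj2 E) eqxx.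
- case: (eqVneq y b) => [->|yb]; first by rewrite Pb T1 T2 Pd.
  case: (eqVneq y d) => [->|yd]; first by rewrite Pd T1 T2 Pb.
  rewrite (T3 y) // T3 //.
  + by apply/eqP => E; move: yd; rewrite -Pd in E; rewrite (sh_inj2 E) eqxx.
  + by apply/eqP => E; move: yb; rewrite -Pb in E; rewrite (sh_inj2 E) eqxx.
Qed.

Lemma s1comm y : s1 (sh y n) = sh (s1 y) n.
Proof.
have E x : s1 x = t (p x) by rewrite /p Hti.
by rewrite !E pcomm tcomm.
Qed.

Lemma sinfcomm y : sinf (sh y n) = sh (sinf y) n.
Proof. by rewrite !Hstd !shD addnC. Qed.

Lemma s0comm y : s0 (sh y n) = sh (s0 y) n.
Proof. by rewrite -!Lsinf sinfcomm pcomm. Qed.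

End Sym.

Definition conjT (g : perm2n n) : tuple4 n := (s0 ^ g, sinf ^ g, s1 ^ g, t ^ g)%g.

Lemma conj_eq (g s : perm2n n) : (forall x, g (s x) = s (g x)) -> (s ^ g)%g = s.
Proof. by move=> H; apply/permP => x; rewrite -(permKV g x) permJ H. Qed.

Lemma comm_of_conj (g s : perm2n n) : (s ^ g)%g = s -> forall x, g (s x) = s (g x).
Proof. by move=> E x; rewrite -permJ E. Qed.

Lemma pdt_conj k (s g : perm2n n) : prod_disj_transp k s -> prod_disj_transp k (s ^ g)%g.
Proof.
case/andP => /eqP H1 H2; apply/andP; split; first by rewrite -conjMg H1 conj1g.
have E : [set x | (s ^ g)%g x != x] = g @: [set x | s x != x].
  apply/setP => x; rewrite -(permKV g x) mem_imset ?inE; last exact: perm_inj.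
  by rewrite permJ (inj_eq perm_inj).
by rewrite E card_imset //; exact: perm_inj.
Qed.

Lemma special_conj (g : perm2n n) m : (forall x, g (sinf x) = sinf (g x)) -> s1 m = m -> t m = m ->
  g m = Ma -> special (conjT g).
Proof.
move=> Gs S T Gm; case: HS' => [[P0 F P1 Pt Pr] [Std Fa]].
have Es := conj_eq Gs.
rewrite /special /conjT /admissible; apply/and3P; split.
- apply/and5P; split; try exact: pdt_conj; first by rewrite Es.
  by rewrite -!conjMg Hprod conj1g.
- by rewrite Es.
- apply/forallP => x; apply/implyP => /eqP Hx.
  have Ex : x = g m.
    by apply: eq_val; rewrite Gm vMa; move: Hx; rewrite /lab; lia.
  by rewrite Ex !permJ S T !eqxx.
Qed.

Definition gm (m : pt n) := rotp n (dist m Ma).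
Lemma gm_m m : gm m m = Ma. Proof. by rewrite /gm rotpE sh_dist. Qed.
Lemma gm_comm m x : gm m (sinf x) = sinf (gm m x). Proof. exact: (rotp_comm _ Hstd). Qed.
Definition phi m := conjT (gm m).
Lemma gm_inv m : ((gm m)^-1)%g Ma = m.
Proof. by apply: (@perm_inj _ (gm m)); rewrite permKV gm_m. Qed.

Lemma class_eq : special_in_class (s0, sinf, s1, t) = phi @: Mset.
Proof.
apply/setP => S'; rewrite inE; apply/andP/imsetP.
- case: S' => [[[b0 b1] b2] b3] [Hsp /existsP [g /and4P [/eqP e0 /eqP e1 /eqP e2 /eqP e3]]].
  subst b0 b1 b2 b3.
  move: Hsp => /and3P [_ Std Fa].
  have Es : (sinf ^ g)%g = sinf.
    by apply/permP => x; rewrite (std_of Std) Hstd.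
  have Gs := comm_of_conj Es.
  set m := (g^-1)%g Ma.
  have Gm : g m = Ma by rewrite permKV.
  have Hl : lab Ma == N by rewrite /lab vMa; apply/eqP; have := Npos; lia.
  move: (forallP Fa Ma); rewrite Hl /= -{1 3}Gm !permJ => /andP [/eqP S /eqP T].
  have S1' : s1 m = m by apply: (@perm_inj _ g); rewrite S Gm.
  have T1' : t m = m by apply: (@perm_inj _ g); rewrite T Gm.
  exists m; first exact: mid_char.
  have -> // : g = gm m.
  by apply: (comm_unique (m := m) Hstd Gs (gm_comm m)); rewrite Gm gm_m.
- case=> m Hm ->; case: (Mset_fix Hm) => S T; split.
  + exact: (special_conj (gm_comm m) S T (gm_m m)).
  + by apply/existsP; exists (gm m); rewrite !eqxx.
Qed.

Lemma conj_stab (g g' : perm2n n) (s : perm2n n) : (s ^ g)%g = (s ^ g')%g -> (s ^ (g' * g^-1))%g = s.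
Proof. by move=> E; rewrite conjgM -E conjgK. Qed.

Lemma phi_eq m m' : phi m = phi m' -> m != m' ->
  (forall x, (gm m' * (gm m)^-1)%g x = sh x n) /\ [&& ~~ odd n, k1 == n - h & k2 == n + h].
Proof.
move=> E Hne; rewrite /phi /conjT in E; case: E => E0 E1 E2 E3.
apply: stab.
- exact: comm_of_conj (conj_stab E1).
- exact: comm_of_conj (conj_stab E2).
- exact: comm_of_conj (conj_stab E3).
- by exists m'; rewrite permM gm_m -(gm_m m) permK.
Qed.

Lemma shM x L : sh (M x L) n = M (sh x n) L.
Proof. by rewrite /M !shD addnC. Qed.

Lemma count_main : #|special_in_class (s0, sinf, s1, t)| =
  (if [&& ~~ odd n, k1 == n - h & k2 == n + h] then 2 else 4)%N.
Proof.
rewrite class_eq; case: ifP => Hsym.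
- move: (Hsym) => /and3P [_ /eqP K1 /eqP K2].
  case: (pairs K1 K2) => Pa Pb Pc Pd.
  set r := rotp n n.
  have Rc (s : perm2n n) : (forall y, s (sh y n) = sh (s y) n) -> (s ^ r)%g = s.
    by move=> H; apply: conj_eq => x; rewrite !rotpE H.
  have R0 := Rc _ (s0comm K1 K2); have R1 := Rc _ (sinfcomm); have R2 := Rc _ (s1comm K1 K2);
  have R3 := Rc _ (tcomm K1 K2).
  have key m m' : sh m' n = m -> phi m' = phi m.
    move=> Em.
    have Eg : gm m' = (r * gm m)%g.
      apply: (comm_unique Hstd (gm_comm m') _ (m := m')).
      - move=> x; rewrite !permM !rotpE !Hstd !shD; congr (sh x _); lia.
      - by rewrite permM (rotpE n m') Em !gm_m.
    by rewrite /phi Eg /conjT !conjgM R0 R1 R2 R3.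
  have phic : phi Mc = phi Ma by apply: key; rewrite /Mc shM Pc (LaLc K1 K2).
  have phid : phi Md = phi Mb by apply: key; rewrite /Md shM Pd (LbLd K1 K2).
  have Hne : phi Ma != phi Mb.
    apply/negP => /eqP E.
    have Hab : Ma != Mb by apply: ne_val; mnums.
    case: (phi_eq E Hab) => G _.
    have := G Mb; rewrite permM gm_m gm_inv.
    rewrite /Mb shM Pb -(LbLd K1 K2) => /eqP; apply/negP.
    by rewrite -/Md eq_sym; apply: ne_val; mnums.
  have -> : phi @: Mset = [set phi Ma; phi Mb].
    apply/setP => T; apply/imsetP/set2P.
    + case=> m; rewrite !inE => /or4P [] /eqP -> ->; [left|right|left|right] => //.
    + by case=> ->; [exists Ma | exists Mb]; rewrite // !inE eqxx ?orbT.
  by rewrite cards2 Hne.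
- rewrite card_in_imset ?Mset_card //.
  move=> m m' Hm Hm' E; case: (eqVneq m m') => // Hne.
  by case: (phi_eq E Hne) => _ Hs; rewrite Hs in Hsym.
Qed.
End Main.

Theorem proposition8 (n : nat) (S : tuple4 n) (h k1 k2 : nat) :
  special S ->
  (h < k1 < k2)%N -> (k2 < 2 * n - h)%N ->
  (exists a b c d : pt n,
      [/\ lab a = (2 * n - h)%N, lab b = h, lab c = k1, lab d = k2 &
        let: (s0, sinf, s1, t) := S in
        let p := (s1 * t)%g in
        [/\ p a = b, p b = c, p c = d & p d = a]]) ->
  #|special_in_class S| =
    (if [&& ~~ odd n, k1 == n - h & k2 == n + h] then 2 else 4)%N.
Proof.
move=> sp hk hk2 [a [b [c [d [la lb lc ld H]]]]]; move: sp H.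
case: S => [[[s0 sinf] s1] t] sp /= [pa pb pc pd].
exact: (count_main sp hk hk2 la lb lc ld pa pb pc pd).
Qed.
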